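(* Let $G$ be a graph on vertex set $\{1,\dots,N\}$ with independence number $\alpha(G)$, and let $\beta(G)$ be the minimum $d$ such that there exist unit vectors $\ket{\psi_1},\dots,\ket{\psi_N}\in\mathbb{C}^d$ with $\langle\psi_x|\psi_y\rangle=0$ whenever $x,y$ are adjacent in $G$. Consider the equality problem defined by $G$: Alice receives $x$, Bob receives $y$, with the promise that $x=y$ or $x\in G_y$ (the neighbourhood of $y$); Bob outputs $z\in\{1,2\}$ and the success metric is $\mathcal{S}=\frac{1}{\sum_xN_x+N}\sum_y\big(p(1|y,y)+\sum_{x\in G_y}p(2|x,y)\big)$ with $N_x=|G_x|$. Then there exists a quantum protocol achieving $\mathcal{S}=1$ with quantum distinguishability $\mathcal{D}_Q$ such that every classical protocol achieving $\mathcal{S}=1$ has classical distinguishability $\mathcal{D}_C$ satisfying $$\frac{\mathcal{D}_C}{\mathcal{D}_Q}\ge\frac{N}{\alpha(G)\beta(G)}.$$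
   Context: Quantum protocol: Alice sends density operators $\rho_x$ on $\mathbb{C}^{k}$ (any $k$), Bob measures POVMs $\{M_{z|y}\}_z$, $p(z|x,y)=\operatorname{tr}(\rho_xM_{z|y})$; quantum distinguishability $\mathcal{D}_Q=\max_{\{M_x\}}\frac1N\sum_x\operatorname{tr}(\rho_xM_x)$ over POVMs. Classical protocol: encoding $p_e(m|x)$ over messages from a finite set of arbitrary size, decoding $p_d(z|y,m)$, $p(z|x,y)=\sum_mp_e(m|x)p_d(z|y,m)$; classical distinguishability $\mathcal{D}_C=\frac1N\sum_m\max_xp_e(m|x)$. *)

(* Defs.v *)
From HB Require Import structures.
From mathcomp Require Import all_boot all_order all_algebra.
From mathcomp Require Import boolp classical_sets reals.
From mathcomp Require Import complex.
Set Implicit Arguments. Unset Strict Implicit. Unset Printing Implicit Defensive.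
Import Order.TTheory GRing.Theory Num.Theory.
Local Open Scope ring_scope.

Section Defs.
Variable R : realType.
Local Notation C := (R[i]).

(* A graph on vertices 'I_N is a symmetric irreflexive relation G. *)
Definition independent (N : nat) (G : rel 'I_N) (S : {set 'I_N}) : bool :=
  [forall x in S, forall y in S, ~~ G x y].

Definition alpha (N : nat) (G : rel 'I_N) : nat :=
  \max_(S : {set 'I_N} | independent G S) #|S|.

Definition inner (d : nat) (u v : 'cV[C]_d) : C := \sum_i (u i 0)^* * v i 0.

Definition has_orth_rep (N : nat) (G : rel 'I_N) (d : nat) : Prop :=
  exists psi : 'I_N -> 'cV[C]_d,
    (forall x, inner (psi x) (psi x) = 1) /\
    (forall x y, G x y -> inner (psi x) (psi y) = 0).

Definition is_beta (N : nat) (G : rel 'I_N) (b : nat) : Prop :=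
  has_orth_rep G b /\ forall d, has_orth_rep G d -> (b <= d)%N.

Definition conjtr (k : nat) (A : 'M[C]_k) : 'M[C]_k := (map_mx Num.conj A)^T.

Definition psd (k : nat) (A : 'M[C]_k) : Prop :=
  conjtr A = A /\ forall v : 'cV[C]_k, 0 <= inner v (A *m v).

Definition density (k : nat) (rho : 'M[C]_k) : Prop := psd rho /\ \tr rho = 1.

Definition povm (I : finType) (k : nat) (M : I -> 'M[C]_k) : Prop :=
  (forall i, psd (M i)) /\ \sum_i M i = 1%:M.

(* p(z|x,y) = tr(rho_x M_{z|y})   (real part; the trace is real here) *)
Definition qprob (N k : nat) (rho : 'I_N -> 'M[C]_k) (M : 'I_N -> 'I_2 -> 'M[C]_k)
  (z : 'I_2) (x y : 'I_N) : R := complex.Re (\tr (rho x *m M y z)).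

Definition DQ (N k : nat) (rho : 'I_N -> 'M[C]_k) : R :=
  sup [set v : R | exists E : 'I_N -> 'M[C]_k,
         povm E /\ v = N%:R^-1 * \sum_x complex.Re (\tr (rho x *m E x))]%classic.

(* messages in 'I_m (finite set of arbitrary size m);
   pe x m = p_e(m|x), pd y m z = p_d(z|y,m) *)
Definition stoch (I J : finType) (p : I -> J -> R) : Prop :=
  (forall i j, 0 <= p i j) /\ forall i, \sum_j p i j = 1.

Definition cprob (N m : nat) (pe : 'I_N -> 'I_m -> R) (pd : 'I_N -> 'I_m -> 'I_2 -> R)
  (z : 'I_2) (x y : 'I_N) : R := \sum_mu pe x mu * pd y mu z.

Definition DC (N m : nat) (pe : 'I_N -> 'I_m -> R) : R :=
  N%:R^-1 * \sum_mu \big[Num.max/0]_x pe x mu.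

(* output z = 1 is encoded as ord0, z = 2 as (1 : 'I_2);
   G_y = [set x | G y x], N_x = #|G_x| *)
Definition success (N : nat) (G : rel 'I_N) (p : 'I_2 -> 'I_N -> 'I_N -> R) : R :=
  (\sum_x (#|[set x' | G x x']|)%:R + N%:R)^-1 *
  \sum_y (p ord0 y y + \sum_(x | G y x) p (1 : 'I_2) x y).

End Defs.

(* Main.v *)
Require Import Defs.
From HB Require Import structures.
From mathcomp Require Import all_boot all_order all_algebra.
From mathcomp Require Import boolp classical_sets reals complex.
From mathcomp Require Import ring.
Set Implicit Arguments. Unset Strict Implicit. Unset Printing Implicit Defensive.
Import Order.TTheory GRing.Theory Num.Theory.
Local Open Scope ring_scope.

Section Cl.
Variable R : realType.

Lemma card_nbr N (G : rel 'I_N) y :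
  \sum_(x | G y x) (1 : R) = (#|[set x' | G y x']|)%:R.
Proof.
rewrite (eq_bigl (fun x => x \in [set x' | G y x'])); last by move=> x; rewrite inE.
by rewrite sumr_const.
Qed.

Lemma success1 N (G : rel 'I_N) (p : 'I_2 -> 'I_N -> 'I_N -> R) :
  (0 < N)%N ->
  (forall z x y, 0 <= p z x y <= 1) -> success G p = 1 ->
  (forall y, p ord0 y y = 1) /\ (forall x y, G y x -> p 1 x y = 1).
Proof.
move=> hN hp.
set D := (\sum_x (#|[set x' | G x x']|)%:R + N%:R : R).
set T := \sum_y (p ord0 y y + \sum_(x | G y x) p 1 x y).
have Dpos : 0 < D.
  rewrite /D ltr_wpDl ?ltr0n //; apply: sumr_ge0 => i _; exact: ler0n.
rewrite /success -/D -/T => /(congr1 (fun t => D * t)).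
rewrite mulrA mulfV ?gt_eqF // mul1r mulr1 => eTD.
have eS : \sum_y ((1 - p ord0 y y) + \sum_(x | G y x) (1 - p 1 x y)) = 0.
  rewrite big_split /= sumrB.
  under eq_bigr do rewrite sumrB card_nbr.
  rewrite sumrB sumr_const card_ord.
rewrite addrACA -opprD -big_split /= -/T eTD /D.
  by rewrite (addrC (N%:R)) subrr.
have nn : forall y, 0 <= (1 - p ord0 y y) + \sum_(x | G y x) (1 - p 1 x y).
  move=> y; apply: addr_ge0; first by rewrite subr_ge0; case/andP: (hp ord0 y y).
  by apply: sumr_ge0 => x _; rewrite subr_ge0; case/andP: (hp 1 x y).
have ey := psumr_eq0P (fun y _ => nn y) eS.
split.
  move=> y; have /eqP := ey y isT; rewrite paddr_eq0 //.
  - by case/andP => /eqP /eqP; rewrite subr_eq0 => /eqP <-.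
  - by rewrite subr_ge0; case/andP: (hp ord0 y y).
  - by apply: sumr_ge0 => x _; rewrite subr_ge0; case/andP: (hp 1 x y).
move=> x y Gyx; have /eqP := ey y isT; rewrite paddr_eq0 //.
- case/andP => _ /eqP e2.
  have nn2 : forall x', G y x' -> 0 <= 1 - p 1 x' y.
    by move=> x' _; rewrite subr_ge0; case/andP: (hp 1 x' y).
  have /eqP := psumr_eq0P nn2 e2 Gyx.
  by rewrite subr_eq0 => /eqP <-.
- by rewrite subr_ge0; case/andP: (hp ord0 y y).
- by apply: sumr_ge0 => x' _; rewrite subr_ge0; case/andP: (hp 1 x' y).
Qed.

Lemma le_bigmax_seq' (I : eqType) (r : seq I) (F : I -> R) i :
  i \in r -> F i <= \big[Num.max/0]_(j <- r) F j.
Proof.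
elim: r => // a r IH; rewrite inE big_cons => /orP [/eqP->|/IH h].
  by rewrite le_max lexx.
by rewrite le_max h orbT.
Qed.

Lemma cls N m (G : rel 'I_N) (pe : 'I_N -> 'I_m -> R) (pd : 'I_N -> 'I_m -> 'I_2 -> R) :
  (0 < N)%N -> stoch pe -> (forall y, stoch (pd y)) ->
  success G (cprob pe pd) = 1 ->
  N%:R <= (alpha G)%:R * \sum_mu \big[Num.max/0]_x pe x mu.
Proof.
move=> hN [pe0 pe1] spd hs.
have pd0 y mu z : 0 <= pd y mu z by case: (spd y) => h _; exact: h.
have pdle1 y mu z : pd y mu z <= 1.
  case: (spd y) => _ h; rewrite -(h mu) (bigD1 z) //= lerDl.
  by apply: sumr_ge0 => j _; exact: pd0.
have pd2 y mu : pd y mu ord0 + pd y mu 1 = 1.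
  case: (spd y) => _ h; rewrite -(h mu) !big_ord_recl big_ord0 addr0.
  by congr (_ + pd y mu _); apply: val_inj.
have hp z x y : 0 <= cprob pe pd z x y <= 1.
  apply/andP; split; first by apply: sumr_ge0 => mu _; rewrite mulr_ge0.
  rewrite -(pe1 x) /cprob; apply: ler_sum => mu _.
  by rewrite -{2}(mulr1 (pe x mu)) ler_wpM2l.
case: (success1 hN hp hs) => h0 h1.
have key x y z : cprob pe pd z x y = 1 -> forall mu, pe x mu != 0 -> pd y mu z = 1.
  move=> e mu nz.
  have e0 : \sum_mu (pe x mu * (1 - pd y mu z)) = 0.
    under eq_bigr do rewrite mulrBr mulr1.
    by rewrite sumrB (pe1 x) -/(cprob pe pd z x y) e subrr.
  have nn : forall mu, true -> 0 <= pe x mu * (1 - pd y mu z).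
    by move=> mu' _; rewrite mulr_ge0 // subr_ge0.
  have /eqP := psumr_eq0P nn e0 (isT : true) (i := mu).
  rewrite mulf_eq0 (negbTE nz) /= subr_eq0 => /eqP <- //.
have indep mu : independent G [set x | pe x mu != 0].
  apply/forallP => x; apply/implyP; rewrite inE => hx.
  apply/forallP => y; apply/implyP; rewrite inE => hy; apply/negP => Gxy.
  have e1 := key x x ord0 (h0 x) mu hx.
  have e2 := key y x 1 (h1 y x Gxy) mu hy.
  have := pd2 x mu; rewrite e1 e2 => /eqP; rewrite -subr_eq0 addrK.
  by rewrite oner_eq0.
have maxge mu x : pe x mu <= \big[Num.max/0]_x' pe x' mu.
  by apply: le_bigmax_seq'; rewrite mem_index_enum.
have max0 mu : 0 <= \big[Num.max/0]_x' pe x' mu.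
  apply: (big_ind (fun t => 0 <= t)) => //.
  by move=> a b ha hb; rewrite le_max ha.
have colb mu : \sum_x pe x mu <= (alpha G)%:R * \big[Num.max/0]_x' pe x' mu.
  rewrite (bigID (fun x => pe x mu != 0)) /= [X in _ + X]big1; last first.
    by move=> x /negPn /eqP.
  rewrite addr0; apply: le_trans (ler_sum _ (fun x _ => maxge mu x)) _.
  rewrite (eq_bigl (fun x => x \in [set x | pe x mu != 0])); last first.
    by move=> x; rewrite inE.
  rewrite sumr_const -[X in X <= _]mulr_natl; apply: ler_wpM2r => //; rewrite ler_nat.
  rewrite /alpha; exact: (@leq_bigmax_cond _ (independent G) (fun S => #|S|) _ (indep mu)).
have -> : N%:R = \sum_(x < N) (1 : R) by rewrite sumr_const card_ord.
under eq_bigr => x _ do rewrite -(pe1 x).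
rewrite exchange_big mulr_sumr /=; apply: ler_sum => mu _; exact: colb.
Qed.
End Cl.

Section Q.
Variable R : realType.
Local Notation C := (R[i]).

Definition adj m n (A : 'M[C]_(m, n)) : 'M[C]_(n, m) := (map_mx Num.conj A)^T.

Lemma adjE m n (A : 'M[C]_(m, n)) i j : adj A i j = (A j i)^*.
Proof. by rewrite !mxE. Qed.

Lemma adjM m n p (A : 'M[C]_(m, n)) (B : 'M[C]_(n, p)) : adj (A *m B) = adj B *m adj A.
Proof.
apply/matrixP => i j; rewrite !mxE rmorph_sum; apply: eq_bigr => k _.
by rewrite !mxE rmorphM mulrC.
Qed.

Lemma adjK m n (A : 'M[C]_(m, n)) : adj (adj A) = A.
Proof. by apply/matrixP => i j; rewrite !mxE conjCK. Qed.

Lemma adjB m n (A B : 'M[C]_(m, n)) : adj (A - B) = adj A - adj B.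
Proof. by apply/matrixP => i j; rewrite !mxE rmorphB. Qed.

Lemma adj1 n : adj (1%:M : 'M[C]_n) = 1%:M.
Proof.
apply/matrixP => i j; rewrite !mxE eq_sym.
by case: (i == j) => /=; rewrite ?conjC1 ?conjC0.
Qed.

Lemma adj0 m n : adj (0 : 'M[C]_(m, n)) = 0.
Proof. by apply/matrixP => i j; rewrite !mxE conjC0. Qed.

Lemma innerE n (u v : 'cV[C]_n) : inner u v = (adj u *m v) 0 0.
Proof. by rewrite /inner mxE; apply: eq_bigr => i _; rewrite !mxE. Qed.

Lemma inner_ge0 n (u : 'cV[C]_n) : 0 <= inner u u.
Proof. by apply: sumr_ge0 => i _; rewrite mulrC mul_conjC_ge0. Qed.

Lemma inner_adj n k (A : 'M[C]_(n, k)) u v : inner u (A *m v) = inner (adj A *m u) v.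
Proof. by rewrite !innerE adjM adjK mulmxA. Qed.

Lemma psd_adj n k (B : 'M[C]_(n, k)) : psd (adj B *m B).
Proof.
split; first by rewrite /conjtr -/(adj _) adjM adjK.
by move=> v; rewrite -mulmxA inner_adj adjK inner_ge0.
Qed.

Lemma tr_ge0 n (X : 'M[C]_n) : (forall v, 0 <= inner v (X *m v)) -> 0 <= \tr X.
Proof.
move=> h; apply: sumr_ge0 => i _.
have := h (delta_mx i 0); rewrite -colE /inner (bigD1 i) //= big1.
  by rewrite !mxE !eqxx conjC1 mul1r addr0.
by move=> j nji; rewrite !mxE (negbTE nji) conjC0 mul0r.
Qed.

Lemma tr11 (A : 'M[C]_1) : \tr A = A 0 0.
Proof. by rewrite /mxtrace big_ord1. Qed.

Lemma mx11M m (A : 'M[C]_(1, m)) (B : 'M[C]_(m, 1)) (D : 'M[C]_(1, m)) (E : 'M[C]_(m, 1)) :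
  (A *m B *m (D *m E)) 0 0 = (A *m B) 0 0 * (D *m E) 0 0.
Proof. by rewrite mxE big_ord1. Qed.

Definition proj k (v : 'cV[C]_k) : 'M[C]_k := v *m adj v.

Lemma adj_v_v k (v : 'cV[C]_k) : adj v *m v = (inner v v)%:M.
Proof. apply/matrixP => i j; by rewrite !ord1 innerE !mxE eqxx. Qed.

Lemma tr_proj k (v : 'cV[C]_k) : \tr (proj v) = inner v v.
Proof. by rewrite /proj mxtrace_mulC tr11 innerE. Qed.

Lemma tr_projM k (u v : 'cV[C]_k) : \tr (proj u *m proj v) = inner v u * inner u v.
Proof.
rewrite /proj mulmxA mxtrace_mulC tr11 !mulmxA -(mulmxA _ _ v) mx11M.
by rewrite !innerE.
Qed.

Lemma proj_adj k (v : 'cV[C]_k) : adj (proj v) = proj v.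
Proof. by rewrite /proj adjM adjK. Qed.

Lemma proj_idem k (v : 'cV[C]_k) : inner v v = 1 -> proj v *m proj v = proj v.
Proof.
move=> h; by rewrite /proj mulmxA -(mulmxA v) adj_v_v h mul_mx_scalar scale1r.
Qed.

Lemma proj_eq k (v : 'cV[C]_k) : inner v v = 1 -> proj v = adj (proj v) *m proj v.
Proof. by move=> h; rewrite proj_adj proj_idem. Qed.

Lemma projC_eq k (v : 'cV[C]_k) : inner v v = 1 ->
  1%:M - proj v = adj (1%:M - proj v) *m (1%:M - proj v).
Proof.
move=> h; rewrite adjB adj1 proj_adj mulmxBl !mulmxBr !mul1mx !mulmx1.
by rewrite proj_idem // subrr subr0.
Qed.

Lemma Re_le k (v : 'cV[C]_k) (E : 'M[C]_k) : inner v v = 1 -> psd E ->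
  complex.Re (\tr (proj v *m E)) <= complex.Re (\tr E).
Proof.
move=> h [_ hE].
set Q := 1%:M - proj v.
have : 0 <= \tr (adj Q *m E *m Q).
  apply: tr_ge0 => w; rewrite -!mulmxA inner_adj adjK; exact: hE.
have aQ : adj Q = Q by rewrite /Q adjB adj1 proj_adj.
have QQ : Q *m Q = Q by rewrite -{1}aQ -projC_eq.
rewrite aQ mxtrace_mulC mulmxA QQ /Q mulmxBl mul1mx.
rewrite raddfB /= subr_ge0 lecE => /andP [_].
done.
Qed.
End Q.

Section Main.
Variable R : realType.
Local Notation C := (R[i]).

Lemma orth_pos N (G : rel 'I_N) d : (0 < N)%N -> has_orth_rep R G d -> (0 < d)%N.
Proof.
move=> hN; case: d => // [[psi [h _]]].
have := h (Ordinal hN); rewrite /inner big_ord0 => /eqP.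
by rewrite eq_sym oner_eq0.
Qed.

Lemma success_of N (G : rel 'I_N) (p : 'I_2 -> 'I_N -> 'I_N -> R) :
  (0 < N)%N ->
  (forall y, p ord0 y y = 1) -> (forall x y, G y x -> p 1 x y = 1) ->
  success G p = 1.
Proof.
move=> hN h0 h1; rewrite /success.
have -> : \sum_y (p ord0 y y + \sum_(x | G y x) p 1 x y)
   = \sum_y (1 + (#|[set x' | G y x']|)%:R).
  apply: eq_bigr => y _; rewrite h0 -card_nbr; congr (_ + _).
  by apply: eq_bigr => x /h1.
rewrite big_split /= sumr_const card_ord addrC mulVf //.
rewrite gt_eqF // ltr_wpDl ?ltr0n //; apply: sumr_ge0 => i _; exact: ler0n.
Qed.

Lemma DQ_bounds N k (psi : 'I_N -> 'cV[C]_k) : (0 < N)%N ->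
  (forall x, inner (psi x) (psi x) = 1) ->
  N%:R^-1 <= DQ (fun x => proj (psi x)) <= k%:R / N%:R.
Proof.
move=> hN h.
set S := [set v : R | exists E : 'I_N -> 'M[C]_k,
         povm E /\ v = N%:R^-1 * \sum_x complex.Re (\tr (proj (psi x) *m E x))]%classic.
have ub : ubound S (k%:R / N%:R).
  move=> v [E [[Epsd Esum] ->]].
  rewrite mulrC; apply: ler_wpM2r; first by rewrite invr_ge0 ler0n.
  apply: le_trans (ler_sum _ (fun x _ => Re_le (h x) (Epsd x))) _.
  have -> : \sum_x complex.Re (\tr (E x)) = complex.Re (\tr (\sum_x E x)).
    rewrite (big_morph (@mxtrace C k) (@mxtraceD _ _) (mxtrace0 _ _)).
    by rewrite (big_morph (@complex.Re R) (fun a b => raddfD _ a b) (raddf0 _)).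
  rewrite Esum mxtrace1 raddfMn /=.
  exact: lexx.
pose x0 := Ordinal hN.
have mem : S N%:R^-1.
  exists (fun x => if x == x0 then 1%:M else 0); split.
    split.
      move=> x; case: (x == x0).
        by rewrite -{1}(mul1mx 1%:M) -{1}adj1; apply: psd_adj.
      by rewrite -(mulmx0 _ (adj (0 : 'M[C]_k))); apply: psd_adj.
    rewrite (bigD1 x0) //= big1 ?addr0 //.
    by move=> x /negbTE ->.
  rewrite (bigD1 x0) //= big1 ?addr0.
    by rewrite mulmx1 tr_proj h mulr1.
  by move=> x /negbTE ->; rewrite mulmx0 raddf0.
apply/andP; split.
  by apply: ub_le_sup => //; exists (k%:R / N%:R).
by apply: ge_sup => //; exists N%:R^-1.
Qed.
End Main.

Theorem theorem6 (R : realType) (N : nat) (hN : (0 < N)%N) (G : rel 'I_N)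
    (Gsym : symmetric G) (Girr : irreflexive G) (b : nat) (hb : is_beta R G b) :
  exists (k : nat) (rho : 'I_N -> 'M[R[i]]_k) (M : 'I_N -> 'I_2 -> 'M[R[i]]_k),
    (forall x, density (rho x)) /\ (forall y, povm (M y)) /\
    success G (qprob rho M) = 1 /\
    forall (m : nat) (pe : 'I_N -> 'I_m -> R) (pd : 'I_N -> 'I_m -> 'I_2 -> R),
      stoch pe -> (forall y, stoch (pd y)) ->
      success G (cprob pe pd) = 1 ->
      N%:R / ((alpha G)%:R * b%:R) <= DC pe / DQ rho.
Proof.
case: hb => [[psi [hpsi horth]] hmin].
have b0 : (0 < b)%N.
  apply: (@orth_pos R N G b hN); by exists psi.
exists b, (fun x => proj (psi x)),
  (fun y (z : 'I_2) => if z == ord0 then proj (psi y) else 1%:M - proj (psi y)).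
split.
  move=> x; split; last by rewrite tr_proj hpsi.
  by rewrite (proj_eq (hpsi x)); apply: psd_adj.
split.
  move=> y; split.
    move=> z; case: (z == ord0).
      by rewrite (proj_eq (hpsi y)); apply: psd_adj.
    by rewrite (projC_eq (hpsi y)); apply: psd_adj.
  by rewrite !big_ord_recl big_ord0 /= addr0 addrC subrK.
split.
  apply: success_of => //.
    by move=> y; rewrite /qprob /= tr_projM hpsi mulr1.
  move=> x y Gyx; rewrite /qprob /= mulmxBr mulmx1 raddfB /= tr_proj hpsi.
  by rewrite tr_projM (horth _ _ Gyx) mul0r subr0.
move=> m pe pd spe spd hs.
have hc := cls hN spe spd hs.
set S := \sum_mu _ in hc.
case/andP: (DQ_bounds hN hpsi) => qlo qhi.
set q := DQ _ in qlo qhi *.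
have Npos : (0 : R) < N%:R by rewrite ltr0n.
have qpos : 0 < q by apply: lt_le_trans qlo; rewrite invr_gt0.
have a0 : (0 : R) < (alpha G)%:R.
  rewrite ltr0n lt0n; apply/eqP => a0; move: hc; rewrite a0 mul0r.
  by rewrite leNgt Npos.
have bpos : (0 : R) < b%:R by rewrite ltr0n.
rewrite /DC -/S ler_pdivlMr //.
apply: le_trans (ler_wpM2l _ qhi) _.
  by apply: divr_ge0; rewrite ?mulr_ge0 ?ler0n.
have -> : N%:R / ((alpha G)%:R * b%:R) * (b%:R / N%:R) = (alpha G)%:R^-1 :> R.
  field; apply/and3P; split; by rewrite gt_eqF.
rewrite ler_pdivlMl // ler_pdivrMr // mulrC.
done.
Qed.
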